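(* Every Augé–Tapia operator of finite type is recurrent but not quasi-rigid.
   Context: Let $X$ be a separable infinite-dimensional complex Banach space and $T$ a bounded linear operator on $X$. Put $A_T=\{x\in X:\lim_n\|T^nx\|=\infty\}$. A vector $x$ is recurrent if $T^{\omega_n}x\to x$ for some strictly increasing sequence $(\omega_n)$ of positive integers; $\mathrm{Rec}(T)$ is the set of recurrent vectors and $T$ is recurrent if $\mathrm{Rec}(T)$ is dense. $\mathfrak{C}$ is the set of strictly increasing sequences $\omega=(\omega_n)$ of positive integers such that $T^{\omega_n}x\to x$ for some $x\neq0$, and $\mathfrak{L}(\omega)=\{x:T^{\omega_n}x\to x\}$. $T$ is quasi-rigid if $\mathfrak{L}(\omega)$ is dense for some $\omega\in\mathfrak{C}$. A subset $F$ of a Banach space $V$ is asymptotically separated if there is a sequence $(g_n)$ of continuous linear functionals with $\liminf_n|g_n(x)|=0$ for all $x\in F$ and $\lim_n|g_n(x)|=+\infty$ for all $x\notin F$. $T$ is an Augé–Tapia operator of finite type $n$ if there exist an $n$-dimensional subspace $V\subset X$, a bounded linear projection $\mathbb{P}$ of $X$ onto $V$, and an asymptotically separated set $F\subset V$ with both $F$ and $V\setminus F$ dense in $V$, such that $A_T=\mathbb{P}^{-1}(V\setminus F)$ and $\mathrm{Rec}(T)=\mathbb{P}^{-1}(F)$. *)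

(* Defs.v *)
From HB Require Import structures.
From mathcomp Require Import all_boot all_order all_algebra.
From mathcomp Require Import complex.
From mathcomp Require Import all_classical all_reals all_analysis.
Set Implicit Arguments. Unset Strict Implicit. Unset Printing Implicit Defensive.
Import Order.TTheory GRing.Theory Num.Theory numFieldTopology.Exports numFieldNormedType.Exports.
Local Open Scope classical_set_scope.
Local Open Scope ring_scope.
Local Open Scope complex_scope.

Section Defs.
Context {R : realType} {X : normedModType R[i]}.

Definition separable_space : Prop :=
  exists D : set X, countable D /\ closure D = setT.

Definition lin_indep (n : nat) (b : 'I_n -> X) : Prop :=
  forall c : 'I_n -> R[i], \sum_(i < n) c i *: b i = 0 -> forall i, c i = 0.

Definition span_of (n : nat) (b : 'I_n -> X) : set X :=
  [set x | exists c : 'I_n -> R[i], x = \sum_(i < n) c i *: b i].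

Definition infinite_dimensional : Prop :=
  forall n : nat, exists b : 'I_n -> X, lin_indep b.

Definition subspace_of_dim (n : nat) (V : set X) : Prop :=
  exists b : 'I_n -> X, lin_indep b /\ V = span_of b.

Definition bounded_linear_op (T : X -> X) : Prop := linear T /\ continuous T.

Definition A_set (T : X -> X) : set X :=
  [set x | (fun n => `|iter n T x|) @ \oo --> +oo].

Definition strictly_incr_pos (w : nat -> nat) : Prop :=
  (forall k, (0 < w k)%N) /\ (forall a b, (a < b)%N -> (w a < w b)%N).

Definition Rec (T : X -> X) : set X :=
  [set x | exists w : nat -> nat, strictly_incr_pos w /\
           (fun k => iter (w k) T x) @ \oo --> x].

Definition recurrent (T : X -> X) : Prop := closure (Rec T) = setT.

Definition frakL (T : X -> X) (w : nat -> nat) : set X :=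
  [set x | (fun k => iter (w k) T x) @ \oo --> x].

Definition frakC (T : X -> X) : set (nat -> nat) :=
  [set w | strictly_incr_pos w /\ exists x, x != 0 /\ frakL T w x].

Definition quasi_rigid (T : X -> X) : Prop :=
  exists w, frakC T w /\ closure (frakL T w) = setT.

(* g is a linear functional on the subspace V (values outside V are irrelevant) *)
Definition linear_on (V : set X) (g : X -> (R[i])^o) : Prop :=
  forall (a : R[i]) u v, V u -> V v -> g (a *: u + v) = a * g u + g v.

Definition asymptotically_separated (V F : set X) : Prop :=
  exists g : nat -> X -> (R[i])^o,
    (forall k, linear_on V (g k) /\ {within V, continuous (g k)}) /\
    (forall x, F x -> limn_einf (fun k => (ComplexField.Normc.normc (g k x))%:E) = 0%E) /\
    (forall x, V x -> ~ F x -> (fun k => ComplexField.Normc.normc (g k x)) @ \oo --> +oo).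

Definition AugeTapia_finite_type (T : X -> X) (n : nat) : Prop :=
  exists V : set X, subspace_of_dim n V /\
  exists P : X -> X, bounded_linear_op P /\
    (forall x, V (P x)) /\ (forall v, V v -> P v = v) /\
  exists F : set X, F `<=` V /\ asymptotically_separated V F /\
    V `<=` closure F /\ V `<=` closure (V `\` F) /\
    A_set T = P @^-1` (V `\` F) /\ Rec T = P @^-1` F.

End Defs.

(* Main.v *)
Require Import Defs.
From HB Require Import structures.
From mathcomp Require Import all_boot all_order all_algebra.
From mathcomp Require Import complex.
From mathcomp Require Import all_classical all_reals all_analysis.
From mathcomp Require Import lra.
Set Implicit Arguments. Unset Strict Implicit. Unset Printing Implicit Defensive.
Import Order.TTheory GRing.Theory Num.Theory numFieldTopology.Exports numFieldNormedType.Exports.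
Local Open Scope classical_set_scope.
Local Open Scope ring_scope.
Local Open Scope complex_scope.

Section Norms.
Variable R : realType.
Local Notation K := R[i].

Lemma ge0_C (z : K) : 0 <= z -> z = (complex.Re z)%:C.
Proof. by move=> h; have := ger0_Im h; case: z h => a b /= _ ->. Qed.

Lemma ge0_Re (z : K) : 0 <= z -> 0 <= complex.Re z.
Proof. by rewrite lecE => /andP[]. Qed.

Definition nn {V : normedModType K} (x : V) : R := complex.Re `|x|.

Lemma nnE {V : normedModType K} (x : V) : `|x| = (nn x)%:C.
Proof. exact: ge0_C. Qed.

Lemma nn_ge0 {V : normedModType K} (x : V) : 0 <= nn x.
Proof. exact: ge0_Re. Qed.

Lemma nnD {V : normedModType K} (x y : V) : nn (x + y) <= nn x + nn y.
Proof. by have := ler_normD x y; rewrite !nnE -rmorphD lecR. Qed.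

Lemma nnN {V : normedModType K} (x : V) : nn (- x) = nn x.
Proof. by rewrite /nn normrN. Qed.

Lemma nnB {V : normedModType K} (x y : V) : nn (x - y) = nn (y - x).
Proof. by rewrite /nn distrC. Qed.

Definition nK (t : K) : R := complex.Re `|t|.

Lemma nKE (t : K) : `|t| = (nK t)%:C.
Proof. exact: ge0_C. Qed.

Lemma nK_ge0 (t : K) : 0 <= nK t.
Proof. exact: ge0_Re. Qed.

Lemma nKD (x y : K) : nK (x + y) <= nK x + nK y.
Proof. by have := ler_normD x y; rewrite !nKE -rmorphD lecR. Qed.

Lemma nKB (x y : K) : nK (x - y) = nK (y - x).
Proof. by rewrite /nK distrC. Qed.

Lemma nKN (x : K) : nK (- x) = nK x.
Proof. by rewrite /nK normrN. Qed.

Lemma nnZ {V : normedModType K} (t : K) (x : V) : nn (t *: x) = nK t * nn x.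
Proof. by apply: complexI; rewrite -nnE normrZ nKE nnE rmorphM. Qed.

Lemma nnM (t s : K) : nK (t * s) = nK t * nK s.
Proof. by apply: complexI; rewrite -nKE normrM !nKE rmorphM. Qed.

Lemma nK_eq0 (x : K) : nK x = 0 -> x = 0.
Proof. by move=> h; apply/normr0_eq0; rewrite nKE h. Qed.

Lemma nn0 {V : normedModType K} : nn (0 : V) = 0.
Proof. by rewrite /nn normr0. Qed.

Lemma nn_eq0 {V : normedModType K} (x : V) : nn x = 0 -> x = 0.
Proof. by move=> h; apply/normr0_eq0; rewrite nnE h. Qed.

Lemma nn1 : nK (1 : K) = 1.
Proof. by rewrite /nK normr1. Qed.

Lemma nnV (t : K) : nK (t^-1) = (nK t)^-1.
Proof. by apply: complexI; rewrite -nKE normfV nKE fmorphV. Qed.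

Lemma nn_Re (z : K) : `|complex.Re z| <= nK z.
Proof.
rewrite /nK normc_def /=.
rewrite -(sqrtr_sqr (complex.Re z)) ler_sqrt ?lerDl ?sqr_ge0 //.
by rewrite addr_ge0 ?sqr_ge0.
Qed.

Lemma nn_Im (z : K) : `|complex.Im z| <= nK z.
Proof.
rewrite /nK normc_def /=.
rewrite -(sqrtr_sqr (complex.Im z)) ler_sqrt ?lerDr ?sqr_ge0 //.
by rewrite addr_ge0 ?sqr_ge0.
Qed.

Lemma nn_ReIm (z : K) : nK z <= `|complex.Re z| + `|complex.Im z|.
Proof.
case: z => a b.
have -> : a +i* b = a%:C + b%:C * 'i by apply/eqP; rewrite eq_complex /= !mulr0 !mul0r !mulr1 !subr0 !addr0 add0r !eqxx.
apply: le_trans (nKD _ _) _; rewrite nnM.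
have h : forall r : R, nK r%:C = `|r|.
  by move=> r; apply: complexI; rewrite -nKE normc_def /= expr0n /= addr0 sqrtr_sqr.
rewrite !h.
have -> : nK ('i : K) = 1 by rewrite /nK normc_def /= expr0n /= add0r expr1n sqrtr1.
by rewrite mulr1 /= !mulr0 !mul0r !mulr1 !subr0 !addr0 add0r.
Qed.


Lemma ReB (x y : K) : complex.Re (x - y) = complex.Re x - complex.Re y.
Proof. by case: x; case: y. Qed.
Lemma ImB (x y : K) : complex.Im (x - y) = complex.Im x - complex.Im y.
Proof. by case: x; case: y. Qed.

Lemma cauchyR (a : nat -> R) :
  (forall e, 0 < e -> exists N, forall j k, (N <= j)%N -> (N <= k)%N -> `|a j - a k| < e) ->
  exists l, forall e, 0 < e -> exists N, forall j, (N <= j)%N -> `|a j - l| < e.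
Proof.
move=> H.
have : cvg (a @ \oo).
  apply: cauchy_cvg; apply: cauchy_exP => e e0.
  have [N HN] := H e e0.
  exists (a N). exists N => // j /= Nj. by rewrite /ball /= HN.
move=> /cvgrPdist_lt cv; exists (lim (a @ \oo)) => e e0.
have [N _ HN] := cv e e0.
exists N => j Nj. rewrite distrC. exact: HN.
Qed.

Lemma cauchyK (s : nat -> K) :
  (forall e, 0 < e -> exists N, forall j k, (N <= j)%N -> (N <= k)%N -> nK (s j - s k) < e) ->
  exists l, forall e, 0 < e -> exists N, forall j, (N <= j)%N -> nK (s j - l) < e.
Proof.
move=> H.
have [la Hla] : exists l, forall e, 0 < e -> exists N, forall j, (N <= j)%N -> `|complex.Re (s j) - l| < e.
  apply: cauchyR => e e0; have [N HN] := H e e0; exists N => j k Nj Nk.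
  by rewrite -ReB; apply: le_lt_trans (nn_Re _) (HN _ _ Nj Nk).
have [lb Hlb] : exists l, forall e, 0 < e -> exists N, forall j, (N <= j)%N -> `|complex.Im (s j) - l| < e.
  apply: cauchyR => e e0; have [N HN] := H e e0; exists N => j k Nj Nk.
  by rewrite -ImB; apply: le_lt_trans (nn_Im _) (HN _ _ Nj Nk).
exists (la +i* lb) => e e0.
have e20 : 0 < e / 2 by rewrite divr_gt0.
have [N1 H1] := Hla _ e20; have [N2 H2] := Hlb _ e20.
exists (maxn N1 N2) => j; rewrite geq_max => /andP[j1 j2].
apply: le_lt_trans (nn_ReIm _) _.
rewrite ReB ImB /= (splitr e) ltrD //; [exact: H1|exact: H2].
Qed.

Lemma closureP {V : normedModType K} (A : set V) x :
  closure A x <-> (forall e : R, 0 < e -> exists y, A y /\ nn (x - y) < e).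
Proof.
split.
  move=> cl e e0.
  have e0' : (0 : K) < e%:C by rewrite ltcR.
  have [y [Ay By]] := cl _ (nbhsx_ballx x _ e0').
  exists y; split => //; move: By; rewrite -ball_normE /ball_ /= nnE.
  by rewrite ltcR.
move=> H B /nbhs_ballP [e /= e0 sub].
have eE := ge0_C (ltW e0).
have e0' : 0 < complex.Re e by move: e0; rewrite ltcE => /andP[].
have [y [Ay Hy]] := H _ e0'.
exists y; split => //; apply: sub.
by rewrite -ball_normE /ball_ /= nnE eE ltcR.
Qed.

End Norms.

Section Lin.
Variable R : realType.
Local Notation K := R[i].
Variable X : normedModType K.

Definition bw n (b : 'I_n.+1 -> X) : 'I_n -> X := fun i => b (widen_ord (leqnSn n) i).

Definition ext n (c : 'I_n -> K) (t : K) : 'I_n.+1 -> K :=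
  fun i => if unlift ord_max i is Some j then c j else t.

Lemma widen_lift n (i : 'I_n) : widen_ord (leqnSn n) i = lift ord_max i.
Proof. by apply: val_inj; rewrite /= /bump leqNgt ltn_ord. Qed.

Lemma sum_ext n (b : 'I_n.+1 -> X) (c : 'I_n -> K) t :
  \sum_(i < n.+1) ext c t i *: b i = \sum_(i < n) c i *: bw b i + t *: b ord_max.
Proof.
rewrite big_ord_recr /= /ext unlift_none; congr (_ + _).
by apply: eq_bigr => i _; rewrite widen_lift liftK /bw widen_lift.
Qed.

Lemma span_recr n (b : 'I_n.+1 -> X) v :
  span_of b v <-> exists u t, span_of (bw b) u /\ v = u + t *: b ord_max.
Proof.
split.
  move=> [c ->]; exists (\sum_(i < n) c (widen_ord (leqnSn n) i) *: bw b i), (c ord_max).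
  by split; [exists (fun i => c (widen_ord (leqnSn n) i))| rewrite big_ord_recr].
by move=> [u [t [[c ->] ->]]]; exists (ext c t); rewrite sum_ext.
Qed.

Lemma ext_widen n (c : 'I_n -> K) t i : ext c t (widen_ord (leqnSn n) i) = c i.
Proof. by rewrite /ext widen_lift liftK. Qed.

Lemma indep_bw n (b : 'I_n.+1 -> X) : lin_indep b -> lin_indep (bw b).
Proof.
move=> ind c s0 i.
have := ind (ext c 0); rewrite sum_ext scale0r addr0 => /(_ s0 (widen_ord (leqnSn n) i)).
by rewrite ext_widen.
Qed.

Lemma indep_last n (b : 'I_n.+1 -> X) : lin_indep b -> ~ span_of (bw b) (b ord_max).
Proof.
move=> ind [c bE].
have := ind (ext c (-1)); rewrite sum_ext -bE scaleN1r subrr => /(_ erefl ord_max).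
rewrite /ext unlift_none => /eqP; rewrite oppr_eq0 oner_eq0 //.
Qed.

Lemma span_0 n (b : 'I_n -> X) : span_of b 0.
Proof. by exists (fun=> 0); rewrite big1 // => i _; rewrite scale0r. Qed.

Lemma span_D n (b : 'I_n -> X) u v : span_of b u -> span_of b v -> span_of b (u + v).
Proof.
move=> [c ->] [d ->]; exists (fun i => c i + d i).
by rewrite -big_split /=; apply: eq_bigr => i _; rewrite scalerDl.
Qed.

Lemma span_Z n (b : 'I_n -> X) a u : span_of b u -> span_of b (a *: u).
Proof.
move=> [c ->]; exists (fun i => a * c i).
by rewrite scaler_sumr; apply: eq_bigr => i _; rewrite scalerA.
Qed.

Lemma span_N n (b : 'I_n -> X) u : span_of b u -> span_of b (- u).
Proof. by move=> h; rewrite -scaleN1r; apply: span_Z. Qed.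

Lemma span_B n (b : 'I_n -> X) u v : span_of b u -> span_of b v -> span_of b (u - v).
Proof. by move=> h1 h2; apply: span_D => //; apply: span_N. Qed.

Lemma span_I0 (b : 'I_0 -> X) v : span_of b v -> v = 0.
Proof. by move=> [c ->]; rewrite big_ord0. Qed.

Lemma span_b n (b : 'I_n -> X) i : span_of b (b i).
Proof.
exists (fun j => if j == i then 1 else 0).
rewrite (bigD1 i) //= eqxx scale1r big1 ?addr0 // => j /negPf ->.
by rewrite scale0r.
Qed.

End Lin.

Section Fin.
Variable R : realType.
Local Notation K := R[i].
Variable X : normedModType K.

Definition apx (A : set X) x :=
  forall e : R, 0 < e -> exists y, A y /\ nn (x - y) < e.

Definition Closed n := forall b : 'I_n -> X, lin_indep b ->
  forall x, apx (span_of b) x -> span_of b x.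

Lemma exN (e : R) : 0 < e -> exists N, forall j, (N <= j)%N -> j.+1%:R^-1 < e.
Proof.
move=> e0; have [N _ HN] := near_infty_natSinv_lt (PosNum e0).
by exists N => j Nj; apply: HN.
Qed.

Lemma closed0 : Closed 0.
Proof.
move=> b _ x ax.
suff -> : x = 0 by apply: span_0.
apply: nn_eq0; apply/eqP; rewrite eq_le nn_ge0 andbT; apply/negP => /negP.
rewrite -ltNge => x0.
have [y [/span_I0 -> ]] := ax _ x0.
by rewrite subr0 ltxx.
Qed.

Lemma sep_of_closed n : Closed n -> forall b : 'I_n.+1 -> X, lin_indep b ->
  exists2 d : R, 0 < d & forall u t, span_of (bw b) u -> d * nK t <= nn (u + t *: b ord_max).
Proof.
move=> Cn b ind.
have [d d0 Hd] : exists2 d : R, 0 < d & forall u, span_of (bw b) u -> d <= nn (b ord_max - u).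
  apply: contrapT => nex; apply: (indep_last ind); apply: Cn; first exact: indep_bw.
  move=> e e0; apply: contrapT => ney; apply: nex; exists e => // u su.
  rewrite leNgt; apply/negP => lt; apply: ney; by exists u.
exists d => // u t su.
have [->|t0] := eqVneq t 0.
  by rewrite /nK normr0 mulr0 nn_ge0.
have -> : u + t *: b ord_max = t *: (b ord_max - (- t^-1 *: u)).
  by rewrite scalerDr scalerN scalerA mulrN mulfV // scaleN1r opprK addrC.
rewrite nnZ mulrC ler_wpM2l ?nK_ge0 //; apply: Hd.
by apply: span_Z.
Qed.


Lemma zmod_id1 (V : zmodType) (x a a' c c' : V) :
  a - a' + (c - c') = (x - (a' + c')) - (x - (a + c)).
Proof. by rewrite opprB [RHS]addrC [RHS]addrA subrK opprD addrACA. Qed.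

Lemma zmod_id2 (V : zmodType) (x y c : V) : y + x = (x + c) + (y - c).
Proof. by rewrite addrACA subrr addr0 addrC. Qed.

Lemma closedS n : Closed n -> Closed n.+1.
Proof.
move=> Cn b ind x ax.
have [d d0 Hd] := sep_of_closed Cn ind.
set bl := b ord_max.
have : forall j : nat, exists p : X * K, span_of (bw b) p.1 /\
          nn (x - (p.1 + p.2 *: bl)) < j.+1%:R^-1.
  move=> j; have jp : (0:R) < j.+1%:R^-1 by rewrite invr_gt0 ltr0Sn.
  have [y [/span_recr [u [t [su ->]]] hy]] := ax _ jp.
  by exists (u, t).
move=> /choice [f Hf].
set u := fun j => (f j).1; set t := fun j => (f j).2.
have key : forall j k, d * nK (t j - t k) <= j.+1%:R^-1 + k.+1%:R^-1.
  move=> j k.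
  have := Hd (u j - u k) (t j - t k) (span_B (Hf j).1 (Hf k).1).
  have -> : u j - u k + (t j - t k) *: bl =
            (x - (u k + t k *: bl)) - (x - (u j + t j *: bl)).
    by rewrite scalerBl (zmod_id1 x).
  move=> h; apply: le_trans h _.
  apply: le_trans (nnD _ _) _; rewrite nnN addrC.
  by apply: lerD; apply: ltW; [exact: (Hf j).2|exact: (Hf k).2].
have [l Hl] : exists l, forall e, 0 < e -> exists N, forall j, (N <= j)%N -> nK (t j - l) < e.
  apply: cauchyK => e e0.
  have de0 : 0 < d * e / 2 by rewrite divr_gt0 ?mulr_gt0.
  have [N HN] := exN de0; exists N => j k Nj Nk.
  have := key j k; have := HN _ Nj; have := HN _ Nk => h1 h2 h3.
  have : d * nK (t j - t k) < d * e.
    move: h1 h2 h3; set A := d * e; set B := d * nK _.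
    set a1 := j.+1%:R^-1; set a2 := k.+1%:R^-1; lra.
  by rewrite ltr_pM2l.
have sy : span_of (bw b) (x - l *: bl).
  apply: Cn; first exact: indep_bw.
  move=> e e0.
  have e20 : 0 < e / 2 by rewrite divr_gt0.
  have nb0 : 0 < nn bl + 1 by rewrite ltr_wpDl ?nn_ge0.
  have e30 : 0 < e / 2 / (nn bl + 1) by rewrite divr_gt0.
  have [N1 H1] := exN e20; have [N2 H2] := Hl _ e30.
  exists (u (maxn N1 N2)); split; first exact: (Hf _).1.
  set j := maxn N1 N2.
  have -> : x - l *: bl - u j = (x - (u j + t j *: bl)) + (t j - l) *: bl.
    rewrite scalerBl /u /t; set a := (f j).1; set c := (f j).2 *: bl.
    by rewrite opprD !addrA subrK addrAC.
  apply: le_lt_trans (nnD _ _) _; rewrite nnZ.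
  have hj1 : nn (x - (u j + t j *: bl)) < e / 2.
    apply: lt_trans (Hf j).2 _; apply: H1; exact: leq_maxl.
  have hj2 : nK (t j - l) < e / 2 / (nn bl + 1) by apply: H2; exact: leq_maxr.
  have hj3 : nK (t j - l) * nn bl <= e / 2.
    have := nn_ge0 bl; have := nK_ge0 (t j - l) => ha hb.
    have : nK (t j - l) * (nn bl + 1) < e / 2.
      by rewrite -ltr_pdivlMr.
    nra.
  lra.
apply/span_recr; exists (x - l *: bl), l; split => //.
by rewrite subrK.
Qed.

Lemma closed_all n : Closed n.
Proof. elim: n => [|n IH]; [exact: closed0|exact: closedS]. Qed.


Definition subsp (W : set X) := W 0 /\ (forall a u v, W u -> W v -> W (a *: u + v)).

Definition Main n := forall b : 'I_n -> X, lin_indep b -> forall W : set X, subsp W ->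
  (forall v, span_of b v -> apx (W `&` span_of b) v) -> span_of b `<=` W.

Lemma main0 : Main 0.
Proof. by move=> b _ W [W0 _] _ v /span_I0 ->. Qed.

Lemma mainS n : Main n -> Main n.+1.
Proof.
move=> Mn b ind W [W0 WL] dense.
have [d d0 Hd] := sep_of_closed (@closed_all n) ind.
set bl := b ord_max.
have [w [[Ww sw] hw]] := dense _ (span_b b ord_max) _ d0.
move: sw => /span_recr [u [t [su wE]]].
have t0 : t != 0.
  apply/negP => /eqP t0; move: hw; rewrite wE t0 scale0r addr0.
  have := Hd (- u) 1 (span_N su); rewrite nn1 mulr1 addrC scale1r -/bl => h1 h2.
  by move: (le_lt_trans h1 h2); rewrite ltxx.
set ue := t^-1 *: u.
have sue : span_of (bw b) ue by apply: span_Z.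
have eW : W (bl + ue).
  have -> : bl + ue = t^-1 *: w + 0.
    by rewrite addr0 wE scalerDr scalerA mulVf // scale1r addrC.
  exact: WL.
have dense' : forall v, span_of (bw b) v -> apx (W `&` span_of (bw b)) v.
  move=> v sv eps eps0.
  set ne := nn (bl + ue).
  have ne0 : 0 <= ne by apply: nn_ge0.
  have dl0 : 0 < d + ne by rewrite ltr_wpDr.
  have del0 : 0 < eps * d / (d + ne) by rewrite divr_gt0 ?mulr_gt0.
  have sv' : span_of b v by apply/span_recr; exists v, 0; rewrite scale0r addr0.
  have [w' [[Ww' sw'] hw']] := dense _ sv' _ del0.
  move: sw' => /span_recr [u' [t' [su' w'E]]].
  exists (w' - t' *: (bl + ue)); split; first split.
  - rewrite addrC -scaleNr; exact: WL.
  - rewrite w'E scalerDr opprD addrA addrK.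
    by apply: span_B => //; apply: span_Z.
  have ht : d * nK t' <= nn (v - w').
    have := Hd (u' - v) t' (span_B su' sv).
    move=> h; apply: (le_trans h); by rewrite nnB w'E addrAC -/bl le_refl.
  have -> : v - (w' - t' *: (bl + ue)) = (v - w') + t' *: (bl + ue).
    by rewrite opprB addrA addrAC.
  apply: le_lt_trans (nnD _ _) _; rewrite nnZ -/ne.
  have hn := nn_ge0 (v - w'); have hk := nK_ge0 t'.
  have hw2 : nn (v - w') * (d + ne) < eps * d.
    by rewrite -ltr_pdivlMr.
  have : d * (nn (v - w') + nK t' * ne) < d * eps.
    move: hw2 ht; set A := nn (v - w'); set B := nK t'.
    move=> hw2 ht.
    have : d * B * ne <= A * ne by rewrite ler_wpM2r.
    nra.
  by rewrite ltr_pM2l.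
have sub' := Mn _ (indep_bw ind) W (conj W0 WL) dense'.
move=> v /span_recr [v' [s [sv' ->]]].
have -> : v' + s *: bl = s *: (bl + ue) + (v' - s *: ue).
  by rewrite scalerDr (zmod_id2 _ _ (s *: ue)).
apply: WL => //; apply: sub'.
by apply: span_B => //; apply: span_Z.
Qed.

Lemma main_all n : Main n.
Proof. elim: n => [|n IH]; [exact: main0|exact: mainS]. Qed.

End Fin.

Section Final.
Variable R : realType.
Local Notation K := R[i].
Variable X : normedModType K.

Lemma lin0 (P : X -> X) : linear P -> P 0 = 0.
Proof.
move=> lP; have := lP 1 0 0; rewrite scale1r !addr0.
by move=> /(congr1 (fun z => z - P 0)); rewrite subrr addrK scale1r => <-.
Qed.

Lemma linD (P : X -> X) u v : linear P -> P (u + v) = P u + P v.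
Proof. by move=> lP; have := lP 1 u v; rewrite !scale1r. Qed.

Lemma linN (P : X -> X) u : linear P -> P (- u) = - P u.
Proof.
move=> lP; have := lP (-1) u 0; rewrite !addr0 lin0 // addr0 !scaleN1r //.
Qed.

Lemma iter_lin (T : X -> X) n a u v : linear T ->
  iter n T (a *: u + v) = a *: iter n T u + iter n T v.
Proof. by move=> lT; elim: n => //= n ->; rewrite lT. Qed.

Lemma iter0 (T : X -> X) n : linear T -> iter n T 0 = 0.
Proof. by move=> lT; elim: n => //= n ->; rewrite lin0. Qed.

Lemma recurrent_part (T : X -> X) (V F : set X) (P : X -> X) :
  linear P -> (forall x, V (P x)) -> (forall v, V v -> P v = v) ->
  F `<=` V -> V `<=` closure F -> Rec T = P @^-1` F -> recurrent T.
Proof.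
move=> lP PV Pid FV Vcl RecE.
rewrite /recurrent RecE; apply/seteqP; split => // x _.
apply/closureP => e e0.
have /closureP := Vcl _ (PV x) => /(_ e e0) [f [Ff hf]].
exists (x - P x + f); split.
  rewrite /preimage /= linD // linD // linN // (Pid _ (PV x)) (Pid _ (FV _ Ff)).
  by rewrite subrr add0r.
by rewrite opprD opprB addrA [x + _]addrC subrK.
Qed.

Lemma not_qr_part (T : X -> X) n (b : 'I_n -> X) (F : set X) (P : X -> X) :
  linear T -> lin_indep b -> linear P -> continuous P ->
  (forall x, span_of b (P x)) -> (forall v, span_of b v -> P v = v) ->
  span_of b `<=` closure (span_of b `\` F) -> Rec T = P @^-1` F -> ~ quasi_rigid T.
Proof.
move=> lT ind lP Pc PV Pid VFcl RecE [w [[wsi _] Ldense]].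
set L := frakL T w.
have LRec : L `<=` Rec T by move=> x Lx; exists w.
set W := [set y | exists x, L x /\ y = P x].
have sW : subsp W.
  split.
    exists 0; split; last by rewrite lin0.
    rewrite /L /frakL /=.
    have -> : (fun k => iter (w k) T 0) = fun=> 0 by apply/funext => k; rewrite iter0.
    exact: cvg_cst.
  move=> a _ _ [x [Lx ->]] [y [Ly ->]]; exists (a *: x + y); split; last by rewrite lP.
  rewrite /L /frakL /=.
  have -> : (fun k => iter (w k) T (a *: x + y)) =
            ((a \*: (fun k => iter (w k) T x)) + (fun k => iter (w k) T y))%R.
    by apply/funext => k; rewrite /= iter_lin.
  exact: cvgD (cvgZr Lx) Ly.
have dense : forall v, span_of b v -> apx (W `&` span_of b) v.
  move=> v sv e e0.
  have e0' : (0 : K) < e%:C by rewrite ltcR.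
  have /cvgrPdist_lt := Pc v => /(_ _ e0') /nbhs_ballP [d /= d0 sub].
  have d0' : 0 < complex.Re d by move: d0; rewrite ltcE => /andP[].
  have := Ldense; rewrite -/L => /seteqP [_ /(_ v I)] /closureP /(_ _ d0') [x [Lx hx]].
  exists (P x); split; first by split; [exists x|exact: PV].
  have := sub x; rewrite -ball_normE /ball_ /= nnE (ge0_C (ltW d0)) ltcR => /(_ hx).
  by rewrite Pid // nnE ltcR.
have VW := main_all ind sW dense.
have := VFcl _ (span_0 b) => /closureP /(_ 1 ltr01) [y [[Vy nFy] _]].
apply: nFy; have [x [Lx ->]] := VW _ Vy.
by have := LRec _ Lx; rewrite RecE.
Qed.

End Final.

Unset Implicit Arguments.
Theorem theorem3p6 (R : realType) (X : completeNormedModType R[i]) (T : X -> X) :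
  @separable_space R X -> @infinite_dimensional R X -> bounded_linear_op T ->
  forall n : nat, AugeTapia_finite_type T n ->
  recurrent T /\ ~ quasi_rigid T.
Proof.
move=> _ _ [lT _] n [V [[b [ind VE]] [P [[lP Pc] [PV [Pid [F [FV [_ [Vcl [VFcl [_ RecE]]]]]]]]]]]].
split.
  exact: (recurrent_part lP PV Pid FV Vcl RecE).
subst V.
exact: (not_qr_part lT ind lP Pc PV Pid VFcl RecE).
Qed.
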